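(* Let $E$ be a finite set of events, each with a timestamp $\tau(e)\in\mathbb{R}$, let $t_w>0$ be a real number and $n\ge 1$ an integer. Let $\mathcal{I}\subseteq 2^E$ consist of all $T\subseteq E$ such that for every $t\in\mathbb{R}$, $|\{e\in T:\tau(e)\in[t,t+t_w)\}|\le n$. Then $(E,\mathcal{I})$ is a $p$-system with $p=2$.
   Context: An independence family $\mathcal{I}\subseteq 2^X$ is a downward-closed family of subsets of $X$. For $Y\subseteq X$, a base of $Y$ is a maximal (with respect to inclusion) set $J\subseteq Y$ with $J\in\mathcal{I}$, i.e. $J\in\mathcal{I}$ and $J\cup\{e\}\notin\mathcal{I}$ for every $e\in Y\setminus J$. $(X,\mathcal{I})$ is a $p$-system if for every $Y\subseteq X$, the maximum cardinality of a base of $Y$ is at most $p$ times the minimum cardinality of a base of $Y$. *)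

(* Defs.v *)
From HB Require Import structures.
From mathcomp Require Import all_boot all_order all_algebra.
From mathcomp Require Import reals.
Set Implicit Arguments. Unset Strict Implicit. Unset Printing Implicit Defensive.
Import Order.TTheory GRing.Theory Num.Theory.
Local Open Scope ring_scope.

Definition set_family (X : finType) := {set X} -> Prop.

Definition independence_family (X : finType) (I : set_family X) : Prop :=
  forall A B : {set X}, B \subset A -> I A -> I B.

Definition is_base (X : finType) (I : set_family X) (Y J : {set X}) : Prop :=
  [/\ J \subset Y, I J & forall e, e \in Y -> e \notin J -> ~ I (e |: J)].

Definition p_system (X : finType) (p : nat) (I : set_family X) : Prop :=
  independence_family I /\
  forall Y J1 J2 : {set X}, is_base I Y J1 -> is_base I Y J2 ->
    (#|J1| <= p * #|J2|)%N.

Definition window_family (R : realType) (E : finType) (tau : E -> R)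
  (tw : R) (n : nat) : set_family E :=
  fun T => forall t : R,
    leq #|[set e in T | (t <= tau e) && (tau e < t + tw)]| n.

(* Main.v *)
Require Import Defs.
From HB Require Import structures.
From mathcomp Require Import all_boot all_order all_algebra.
From mathcomp Require Import reals.
Import Order.TTheory GRing.Theory Num.Theory.
From mathcomp Require Import zify.
Local Open Scope ring_scope.

Lemma seq_max_ex (R : realType) (E : eqType) (f : E -> R) (s : seq E) :
  s != [::] -> exists2 z, z \in s & forall b, b \in s -> f b <= f z.
Proof.
elim: s => [//|x s IH] _.
case: (altP (s =P [::])) => [->|ns].
  by exists x; rewrite ?mem_seq1 // => b; rewrite mem_seq1 => /eqP ->.
have [z zs Hz] := IH ns.
case: (leP (f x) (f z)) => hxz.
  exists z; first by rewrite inE zs orbT.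
  by move=> b; rewrite inE => /orP [/eqP ->|/Hz].
exists x; first by rewrite inE eqxx.
move=> b; rewrite inE => /orP [/eqP ->//|/Hz hb].
by apply: le_trans hb (ltW hxz).
Qed.

Lemma set_max_ex (R : realType) (E : finType) (f : E -> R) (L : {set E}) :
  exists Z : {set E}, [/\ Z \subset L, (#|Z| <= 1)%N &
    forall b, b \in L -> exists2 z, z \in Z & f b <= f z].
Proof.
case: (altP (L =P set0)) => [->|nL].
  by exists set0; split; rewrite ?sub0set ?cards0 // => b; rewrite inE.
have ne : enum L != [::].
  apply/negP => /eqP h; move/negP: nL; apply; apply/eqP/setP => x.
  by rewrite inE -mem_enum h.
have [z zs Hz] := @seq_max_ex _ _ f _ ne.
exists [set z]; split.
- by rewrite sub1set -mem_enum.
- by rewrite cards1.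
- by move=> b bL; exists z; rewrite ?inE // Hz // mem_enum.
Qed.

Section W.
Variables (R : realType) (E : finType) (tau : E -> R) (tw : R) (n : nat).
Let WF := window_family tau tw n.
Let win (t : R) (S : {set E}) := [set x in S | (t <= tau x) && (tau x < t + tw)].

Lemma wf_down (A B : {set E}) : B \subset A -> WF A -> WF B.
Proof.
move=> sBA HA t; apply: leq_trans (HA t); apply: subset_leq_card.
apply/subsetP => x; rewrite !inE => /andP [xB ->]; by rewrite (subsetP sBA).
Qed.

Lemma ext (B A : {set E}) (e : E) : A \subset B -> WF B -> WF (e |: A) ->
  exists Z : {set E}, [/\ Z \subset B :\: A, (#|Z| <= 2)%N & WF (e |: (B :\: Z))].
Proof.
move=> sAB HB HA.
have [Zl [sZl cZl HZl]] := @set_max_ex _ _ tau [set b in B :\: A | tau b <= tau e].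
have [Zr [sZr cZr HZr]] := @set_max_ex _ _ (fun x => - tau x)
   [set b in B :\: A | tau e <= tau b].
exists (Zl :|: Zr); split.
- apply/subsetP => x; rewrite inE => /orP [/(subsetP sZl)|/(subsetP sZr)];
  by rewrite inE => /andP [].
- by apply: leq_trans (leq_card_setU _ _) _; apply: (leq_add cZl cZr).
move=> t.
case Het: ((t <= tau e) && (tau e < t + tw)); last first.
  apply: leq_trans (HB t); apply: subset_leq_card; apply/subsetP => x.
  rewrite !inE => /andP [/orP [/eqP ->|/andP [_ xB]] hx]; first by rewrite hx in Het.
  by rewrite xB hx.
case: (boolP [exists b, (b \in B :\: A) && ((t <= tau b) && (tau b < t + tw))]).
  move=> /existsP [b /andP [bBA hb]].
  have [z [zZ zBA zw]] : exists z, [/\ z \in Zl :|: Zr, z \in B :\: A &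
                                     (t <= tau z) && (tau z < t + tw)].
    move/andP: Het => [h1 h2]; move/andP: hb => [h3 h4].
    case: (leP (tau b) (tau e)) => hbe.
      have bL : b \in [set b in B :\: A | tau b <= tau e] by rewrite inE bBA hbe.
      have [z zZ hz] := HZl b bL.
      move: (subsetP sZl z zZ); rewrite inE => /andP [zBA hze].
      exists z; split; [by rewrite inE zZ| | ]; rewrite // ?zBA.
      by rewrite (le_trans h3 hz) (le_lt_trans hze h2).
    have bL : b \in [set b in B :\: A | tau e <= tau b] by rewrite inE bBA ltW.
    have [z zZ hz] := HZr b bL.
    move: (subsetP sZr z zZ); rewrite inE => /andP [zBA hze].
    rewrite lerN2 in hz.
    exists z; split; [by rewrite inE zZ orbT| | ]; rewrite // ?zBA.
    by rewrite (le_trans h1 hze) (le_lt_trans hz h4).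
  have zwin : z \in win t B.
    by rewrite inE zw andbT; move: zBA; rewrite inE => /andP [].
  apply: leq_trans (HB t).
  have -> : #|win t B| = (#|win t B :\ z|).+1.
    by rewrite (cardsD1 z) zwin.
  apply: leq_trans (subset_leq_card (_ : _ \subset e |: (win t B :\ z))) _.
    apply/subsetP => x; rewrite !inE => /andP [/orP [->//|/andP [xZ xB]] hx].
    rewrite xB hx !andbT; apply/orP; right; apply/negP => /eqP xz.
    by move: xZ zZ; rewrite xz !inE; case: (z \in Zl); case: (z \in Zr).
  by rewrite cardsU1; case: (e \in _).
rewrite negb_exists => /forallP hno.
apply: leq_trans (HA t); apply: subset_leq_card; apply/subsetP => x.
rewrite !inE => /andP [/orP [->//|/andP [_ xB]] hx]; rewrite hx andbT.
apply/orP; right; apply/negPn/negP => xA.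
by move: (hno x); rewrite inE xA xB hx.
Qed.

Lemma key (Y J1 : {set E}) : is_base WF Y J1 ->
  forall B, WF B -> B \subset Y -> (#|B :\: J1| <= 2 * #|J1 :\: B|)%N.
Proof.
move=> [sJY IJ maxJ].
move=> B; move Hm: #|J1 :\: B| => m; elim: m B Hm => [|m IH] B Hm IB sBY.
  have sJB : J1 \subset B by rewrite -setD_eq0 -cards_eq0 Hm.
  rewrite muln0 leqn0 cards_eq0; apply/eqP/setP => x; rewrite !inE.
  apply/negP => /andP [xJ xB]; apply: (maxJ x) => //; first by rewrite (subsetP sBY).
  by apply: wf_down IB; rewrite subUset sub1set xB sJB.
have : (0 < #|J1 :\: B|)%N by rewrite Hm.
rewrite card_gt0 => /set0Pn [e]; rewrite inE => /andP [eB eJ].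
have sA : J1 :&: B \subset B by apply: subsetIr.
have IA : WF (e |: (J1 :&: B)).
  by apply: wf_down IJ; rewrite subUset sub1set eJ subsetIl.
have [Z [sZ cZ IB']] := ext B (J1 :&: B) e sA IB IA.
have ZJ : forall x, x \in Z -> (x \in B) && (x \notin J1).
  by move=> x /(subsetP sZ); rewrite !inE; case: (x \in J1); case: (x \in B).
have H1 : #|J1 :\: (e |: (B :\: Z))| = m.
  have -> : J1 :\: (e |: (B :\: Z)) = (J1 :\: B) :\ e.
    apply/setP => x; rewrite !inE.
    case: (boolP (x \in Z)) => xZ; last first.
      by case: (x \in J1); case: (x \in B); case: (x == e).
    by move: (ZJ x xZ); case: (x \in J1); case: (x \in B); case: (x == e).
  by move: Hm; rewrite (cardsD1 e) inE eB eJ => -[].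
have H2 := IH _ H1 IB'.
have sB' : e |: (B :\: Z) \subset Y.
  rewrite subUset sub1set (subsetP sJY) //=.
  by apply: subset_trans sBY; apply: subsetDl.
have H2' := H2 sB'.
have E1 : (e |: (B :\: Z)) :\: J1 = (B :\: J1) :\: Z.
  apply/setP => x; rewrite !inE. 
  case: (eqVneq x e) => [->|_]; first by rewrite eJ /= ?andbF.
  by case: (x \in J1); case: (x \in B); case: (x \in Z).
rewrite E1 in H2'.
have Hc := cardsID Z (B :\: J1).
have : (#|(B :\: J1) :&: Z| <= 2)%N.
  by apply: leq_trans cZ; apply: subset_leq_card; apply: subsetIr.
move: H2' Hc; rewrite -(addn1 m) mulnDr muln1.
lia.
Qed.
End W.

Theorem theorem2 (R : realType) (E : finType) (tau : E -> R) (tw : R) (n : nat) :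
  0 < tw -> (1 <= n)%N -> p_system 2 (window_family tau tw n).
Proof.
move=> _ _; split; first by move=> A B sBA HA; apply: wf_down sBA HA.
move=> Y J1 J2 b1 b2.
have [sJ1 IJ1 _] := b1.
have H := @key R E tau tw n Y J2 b2 J1 IJ1 sJ1.
have h1 := cardsID J2 J1.
have h2 := cardsID J1 J2.
rewrite setIC in h1.
lia.
Qed.
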